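(* Let $G$ be a finite abelian group, $T \subsetneq G$ a non-empty subset, and fix $x \in G$ with $T + x \ne T$. Put $T^{\uparrow} = T + x$, $C^{\uparrow} = T^{\uparrow}\setminus T$, $C^{\downarrow} = T \setminus T^{\uparrow}$ and $A = T \cup T^{\uparrow}$. Let $d \ge 1$ and suppose that $0 \le i_1, \dots, i_m \le d$ are distinct integers. Then $\left(A^d \setminus (C_{i_1,d}\cup\dots\cup C_{i_m,d})\right)^{\dagger m}$ is a hole in $A^{d+m}$.
   Context: For integers $1 \le i \le e$, $C_{i,e} = C^{\downarrow}\times\dots\times C^{\uparrow}\times\dots\times C^{\downarrow} \subset A^e$ ($e$ factors, $C^{\uparrow}$ in the $i$-th factor, $C^{\downarrow}$ elsewhere), and $C_{0,e} = (C^{\downarrow})^e$. A copy of $T$ in $G^e$ is a translate $\mathsf{T}_j + y$ ($y\in G^e$, $1\le j\le e$), where $\mathsf{T}_j$ is the set of points of $G^e$ with $j$-th coordinate in $T$ and other coordinates $0$; a set is $T$-tilable if it is a disjoint union of copies of $T$. A set $X \subset A^e$ is a hole in $A^e$ if $A^e \setminus X$ is $T$-tilable. For $X \subset A^e$, define $X^{\dagger} = (X \times C^{\downarrow}) \cup C_{e+1,e+1} \subset A^{e+1}$, and for $m \ge 1$ let $X^{\dagger m}$ be the result of $m$ consecutive applications of $\dagger$ (each in the dimension of the current ambient set), a subset of $A^{e+m}$. *)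

(* Defs.v *)
From HB Require Import structures.
From mathcomp Require Import all_boot all_order all_algebra.
Set Implicit Arguments. Unset Strict Implicit. Unset Printing Implicit Defensive.
Import GRing.Theory.
Local Open Scope ring_scope.

Section Tiling.
Variables (G : finZmodType) (T : {set G}) (x : G).

Definition point (e : nat) := {ffun 'I_e -> G}.

Definition Tup : {set G} := [set t + x | t in T].
Definition Cup : {set G} := Tup :\: T.
Definition Cdown : {set G} := T :\: Tup.
Definition Aset : {set G} := T :|: Tup.

Definition Apow (e : nat) : {set point e} := [set f : point e | [forall k, f k \in Aset]].

(* C_{i,e}, for 0 <= i <= e: C^up in the i-th factor (1-based), C^down elsewhere;
   for i = 0 all factors are C^down. *)
Definition Cie (i e : nat) : {set point e} :=
  [set f : point e | [forall k : 'I_e, f k \in (if (k.+1 == i)%N then Cup else Cdown)]].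

Definition Tj (e : nat) (j : 'I_e) : {set point e} :=
  [set f : point e | (f j \in T) && [forall k, (k != j) ==> (f k == 0)]].

Definition is_copy (e : nat) (B : {set point e}) : Prop :=
  exists (j : 'I_e) (y : point e), B = [set ([ffun k => z k + y k] : point e) | z : point e in Tj j].

Definition tilable (e : nat) (S : {set point e}) : Prop :=
  exists P : {set {set point e}},
    (forall B, B \in P -> is_copy B) /\ trivIset P /\ cover P = S.

Definition hole (e : nat) (X : {set point e}) : Prop :=
  X \subset Apow e /\ tilable (Apow e :\: X).

(* dagger: X subset A^e  |->  (X x C^down) u C_{e+1,e+1} subset A^{e+1} *)
Definition restr (e : nat) (f : point e.+1) : point e :=
  [ffun k : 'I_e => f (widen_ord (leqnSn e) k)].

Definition dagger (e : nat) (X : {set point e}) : {set point e.+1} :=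
  [set f : point e.+1 | ((restr f \in X) && (f ord_max \in Cdown)) || (f \in Cie e.+1 e.+1)].

Fixpoint dagger_iter (e m : nat) : {set point e} -> {set point (m + e)} :=
  match m return {set point e} -> {set point (m + e)} with
  | 0 => fun X => X
  | m'.+1 => fun X => dagger (dagger_iter m' X)
  end.

End Tiling.

(* Main.v *)
Require Import Defs.
From mathcomp Require Import all_boot all_order all_algebra.
Set Implicit Arguments. Unset Strict Implicit. Unset Printing Implicit Defensive.
Import GRing.Theory.
Local Open Scope ring_scope.

Section S.
Variables (G : finZmodType) (T : {set G}) (x : G).

Lemma tilable0 e : tilable T (set0 : {set point G e}).
Proof.
exists set0; split; first by move=> B; rewrite inE.
split; first by apply/trivIsetP => A B; rewrite inE.
by rewrite /cover big_set0.
Qed.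

Lemma tilableU e (S1 S2 : {set point G e}) :
  [disjoint S1 & S2] -> tilable T S1 -> tilable T S2 -> tilable T (S1 :|: S2).
Proof.
move=> dis [P1 [c1 [t1 e1]]] [P2 [c2 [t2 e2]]].
have cU : cover (P1 :|: P2) = S1 :|: S2 by rewrite /cover bigcup_setU -/(cover P1) -/(cover P2) e1 e2.
exists (P1 :|: P2); split; first by move=> B; rewrite inE => /orP [] ?; [apply: c1 | apply: c2].
split=> //; apply: trivIsetU => //; by rewrite e1 e2.
Qed.

Definition line e (j : 'I_e) (y : point G e) (V : {set G}) : {set point G e} :=
  [set f : point G e | (f j \in V) && [forall k, (k != j) ==> (f k == y k)]].

Lemma line_copy e (j : 'I_e) (y : point G e) (c : G) :
  is_copy T (line j y [set t + c | t in T]).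
Proof.
pose y' : point G e := [ffun k => if k == j then c else y k].
exists j, y'; apply/setP => f; rewrite inE; apply/idP/imsetP.
  case/andP=> /imsetP [t tT ft] /forallP H.
  exists ([ffun k => if k == j then t else 0] : point G e).
    rewrite /Tj inE ffunE eqxx tT /=; apply/forallP => k; rewrite ffunE.
    apply/implyP => kj; by rewrite (negbTE kj).
  apply/ffunP => k; rewrite !ffunE; case: eqP => [->|/eqP kj]; first by rewrite ft.
  by rewrite add0r; apply/eqP; move: (H k); rewrite kj.
case=> z; rewrite /Tj inE => /andP [zT /forallP zk] ->.
rewrite !ffunE eqxx; apply/andP; split; first by apply/imsetP; exists (z j).
apply/forallP => k; apply/implyP => kj; rewrite !ffunE (negbTE kj).
by move: (zk k); rewrite kj => /eqP ->; rewrite add0r.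
Qed.

Lemma tilable_fiber e (j : 'I_e) (c : G) (P : pred (point G e))
  (HP : forall f g : point G e, (forall k, k != j -> f k = g k) -> P f = P g) :
  tilable T [set f : point G e | (f j \in [set t + c | t in T]) && P f].
Proof.
set V := [set t + c | t in T].
exists [set line j y V | y in [set y : point G e | (y j == 0) && P y]].
split; first by move=> B /imsetP [y _ ->]; apply: line_copy.
split.
  apply/trivIsetP => A B /imsetP [y1 Hy1 ->] /imsetP [y2 Hy2 ->] neq.
  rewrite -setI_eq0; apply/eqP/setP => f; rewrite !inE.
  apply/negP => /andP [/andP [_ /forallP H1] /andP [_ /forallP H2]].
  move/negP: neq; apply; apply/eqP; congr line; apply/ffunP => k.
  move: Hy1 Hy2; rewrite !inE => /andP [/eqP h1 _] /andP [/eqP h2 _].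
  case: (eqVneq k j) => [->|kj]; first by rewrite h1 h2.
  by move: (H1 k) (H2 k); rewrite kj /= => /eqP <- /eqP <-.
rewrite cover_imset; apply/setP => f; rewrite inE; apply/bigcupP/idP.
  case=> y; rewrite inE => /andP [_ Py]; rewrite inE => /andP [fV /forallP H].
  rewrite fV /= (HP f y) // => k kj; by move: (H k); rewrite kj => /eqP.
case/andP=> fV Pf; exists ([ffun k => if k == j then 0 else f k] : point G e).
  rewrite inE ffunE !eqxx /= (HP _ f) // => k kj; by rewrite ffunE (negbTE kj).
rewrite inE fV /=; apply/forallP => k; apply/implyP => kj; by rewrite ffunE (negbTE kj).
Qed.


Lemma T0 : [set t + 0 | t in T] = T.
Proof.
apply/setP => a; apply/imsetP/idP => [[t tT ->]|aT]; first by rewrite addr0.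
by exists a; rewrite ?addr0.
Qed.

Lemma widen_lift e (i : 'I_e) : lift ord_max i = widen_ord (leqnSn e) i.
Proof. by apply/val_inj; rewrite /= /bump leqNgt ltn_ord. Qed.

Lemma widen_neq e (i : 'I_e) : (widen_ord (leqnSn e) i != ord_max).
Proof. by rewrite -val_eqE /= neq_ltn ltn_ord. Qed.

Lemma ordS_cases e (k : 'I_e.+1) : k = ord_max \/ exists i : 'I_e, k = widen_ord (leqnSn e) i.
Proof.
by case: (unliftP ord_max k) => [i ->|->]; [right; exists i; rewrite widen_lift | left].
Qed.

Lemma restrE e (f : point G e.+1) k : restr f k = f (widen_ord (leqnSn e) k).
Proof. by rewrite /restr ffunE. Qed.

Lemma restr_eq e (f g : point G e.+1) :
  (forall k, k != ord_max -> f k = g k) -> restr f = restr g.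
Proof. by move=> H; apply/ffunP => k; rewrite !restrE H // widen_neq. Qed.

Lemma tilable_vert e (Q : {set point G e}) (c : G) :
  tilable T [set f : point G e.+1 | (restr f \in Q) && (f ord_max \in [set t + c | t in T])].
Proof.
have -> : [set f : point G e.+1 | (restr f \in Q) && (f ord_max \in [set t + c | t in T])]
  = [set f : point G e.+1 | (f ord_max \in [set t + c | t in T]) && (restr f \in Q)].
  by apply/setP => f; rewrite !inE andbC.
by apply: tilable_fiber => f g H; rewrite (restr_eq H).
Qed.

Definition ext e (c : G) (B : {set point G e}) : {set point G e.+1} :=
  [set f : point G e.+1 | (restr f \in B) && (f ord_max == c)].

Definition extend e (y : point G e) (c : G) : point G e.+1 :=
  [ffun k => if unlift ord_max k is Some k' then y k' else c].

Lemma extend_max e (y : point G e) c : extend y c ord_max = c.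
Proof. by rewrite ffunE unlift_none. Qed.

Lemma extend_widen e (y : point G e) c k : extend y c (widen_ord (leqnSn e) k) = y k.
Proof. by rewrite ffunE -widen_lift liftK. Qed.

Lemma mem_transl e (S : {set point G e}) (y f : point G e) :
  (f \in [set ([ffun k => z k + y k] : point G e) | z : point G e in S]) = ([ffun k => f k - y k] \in S).
Proof.
apply/imsetP/idP => [[z zS ->]|H].
  by have -> : [ffun k => [ffun k0 => z k0 + y k0] k - y k] = z
    by apply/ffunP => k; rewrite !ffunE addrK.
by exists [ffun k => f k - y k] => //; apply/ffunP => k; rewrite !ffunE subrK.
Qed.

Lemma Tj_widen e (j : 'I_e) (f : point G e.+1) :
  (f \in Tj T (widen_ord (leqnSn e) j)) = (restr f \in Tj T j) && (f ord_max == 0).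
Proof.
rewrite /Tj !inE restrE; apply/andP/andP.
  case=> fT /forallP H; split; last first.
    by move: (H ord_max); rewrite eq_sym widen_neq.
  rewrite fT; apply/forallP => k; apply/implyP => kj; rewrite restrE.
  move: (H (widen_ord (leqnSn e) k)); rewrite -(inj_eq val_inj) /= => /implyP; apply.
  by rewrite (inj_eq val_inj).
case=> /andP [fT /forallP H] fm; split => //; apply/forallP => k; apply/implyP => kj.
case: (ordS_cases k) => [->//|[i ki]]; subst k.
move: (H i); rewrite restrE => /implyP; apply.
by apply: contra kj => /eqP ->.
Qed.

Lemma ext_copy e (c : G) (B : {set point G e}) : is_copy T B -> is_copy T (ext c B).
Proof.
case=> j [y ->]; exists (widen_ord (leqnSn e) j), (extend y c).
apply/setP => f; rewrite inE !mem_transl Tj_widen.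
have -> : restr [ffun k => f k - extend y c k] = [ffun k => restr f k - y k].
  by apply/ffunP => k; rewrite !ffunE -widen_lift liftK.
by rewrite ffunE extend_max subr_eq0.
Qed.

Lemma tilable_ext e (Z : {set point G e}) (W : {set G}) :
  tilable T Z -> tilable T [set f : point G e.+1 | (restr f \in Z) && (f ord_max \in W)].
Proof.
case=> P [cP [tP eP]].
exists [set ext c B | B in P, c in W]; split.
  by move=> B' /imset2P [B c BP _ ->]; apply/ext_copy/cP.
split.
  apply/trivIsetP => B1 B2 /imset2P [C1 c1 C1P _ ->] /imset2P [C2 c2 C2P _ ->] neq.
  rewrite -setI_eq0; apply/eqP/setP => f; rewrite !inE.
  apply/negP => /andP [/andP [f1 /eqP m1] /andP [f2 /eqP m2]].
  move/negP: neq; apply; apply/eqP; rewrite -m1 -m2.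
  case: (eqVneq C1 C2) => [->//|n12].
  move/trivIsetP: tP => /(_ C1 C2 C1P C2P n12).
  by rewrite -setI_eq0 => /eqP /setP /(_ (restr f)); rewrite !inE f1 f2.
apply/setP => f; rewrite /cover inE; apply/bigcupP/idP.
  case=> B /imset2P [C c CP cW ->]; rewrite inE => /andP [fC /eqP fm].
  rewrite -eP fm cW andbT; apply/bigcupP; by exists C.
case/andP; rewrite -eP => /bigcupP [C CP fC] fW.
exists (ext (f ord_max) C); first by apply/imset2P; exists C (f ord_max).
by rewrite inE fC eqxx.
Qed.


Lemma forall_at e (j : 'I_e) (P : pred 'I_e) :
  [forall k, P k] = P j && [forall k, (k != j) ==> P k].
Proof.
apply/forallP/andP => [H|[Pj /forallP H] k]; first by split => //; apply/forallP => k; rewrite H implybT.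
by case: (eqVneq k j) => [->//|kj]; move: (H k); rewrite kj.
Qed.

Lemma forall_S e (P : pred 'I_e.+1) :
  [forall k, P k] = [forall k : 'I_e, P (widen_ord (leqnSn e) k)] && P ord_max.
Proof.
apply/forallP/andP => [H|[/forallP H Pm] k]; first by split => //; apply/forallP => k.
by case: (ordS_cases k) => [->|[i ->]].
Qed.

Definition offD e (g : point G e) (j : 'I_e) := [forall k, (k != j) ==> (g k \in Cdown T x)].

Lemma mem_Apow_S e (f : point G e.+1) :
  (f \in Apow T x e.+1) = (restr f \in Apow T x e) && (f ord_max \in Aset T x).
Proof. rewrite /Apow !inE forall_S; congr (_ && _); [apply/eq_forallb => k; by rewrite restrE | by rewrite /Aset inE]. Qed.

Lemma mem_Cie_S e (i : nat) (f : point G e.+1) : (i <= e)%N ->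
  (f \in Cie T x i e.+1) = (restr f \in Cie T x i e) && (f ord_max \in Cdown T x).
Proof.
move=> ie; rewrite /Cie !inE forall_S; congr (_ && _).
  by apply: eq_forallb => k; rewrite restrE.
have -> : (e.+1 == i) = false by apply/negbTE; rewrite neq_ltn ltnS ie orbT.
by rewrite /Cdown inE.
Qed.

Lemma mem_Cie_top e (f : point G e.+1) :
  (f \in Cie T x e.+1 e.+1) = (restr f \in Cie T x 0 e) && (f ord_max \in Cup T x).
Proof.
rewrite /Cie !inE forall_S /= eqxx; congr (_ && _).
apply: eq_forallb => k; rewrite restrE /=.
by have -> : (k.+1 == e.+1)%N = false by apply/negbTE; rewrite eqSS neq_ltn ltn_ord.
by rewrite /Cup inE.
Qed.

Lemma mem_dagger e (X : {set point G e}) (f : point G e.+1) :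
  (f \in dagger T x X) = ((restr f \in X) && (f ord_max \in Cdown T x))
     || ((restr f \in Cie T x 0 e) && (f ord_max \in Cup T x)).
Proof. by rewrite /dagger inE mem_Cie_top. Qed.

Lemma Cie_split e (j : 'I_e) (g : point G e) :
  (g \in Cie T x j.+1 e) = (g j \in Cup T x) && offD g j.
Proof.
rewrite /Cie inE (forall_at j) eqxx; congr (_ && _); apply: eq_forallb => k.
rewrite eqSS; case: (boolP (k == j)) => kj //=.
have E : (nat_of_ord k == nat_of_ord j) = false := negbTE kj. by rewrite E.
Qed.

Lemma Cie0_split e (j : 'I_e) (g : point G e) :
  (g \in Cie T x 0 e) = (g j \in Cdown T x) && offD g j.
Proof. by rewrite /Cie inE (forall_at j). Qed.

Lemma Apow_off e (j : 'I_e) (g : point G e) : offD g j ->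
  (g \in Apow T x e) = (g j \in Aset T x).
Proof.
move=> /forallP H; rewrite /Apow inE (forall_at j); case: (g j \in Aset T x) => //=.
apply/forallP => k; apply/implyP => kj; move: (H k); rewrite kj /= /Cdown /Aset !inE.
by case/andP => _ ->.
Qed.

Lemma Cie_sub e i : Cie T x i e \subset Apow T x e.
Proof.
apply/subsetP => g; rewrite /Cie /Apow !inE => /forallP H; apply/forallP => k.
move: (H k); case: (_ == _); rewrite /Cup /Cdown /Aset !inE.
  by case/andP => _ ->; rewrite orbT.
by case/andP => _ ->.
Qed.


Lemma disjP' e (A B : {set point G e}) :
  (forall f, ~~ ((f \in A) && (f \in B))) -> [disjoint A & B].
Proof. by move=> H; rewrite -setI_eq0; apply/eqP/setP => f; rewrite !inE; apply/negbTE. Qed.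

Lemma tilableT e (Q : {set point G e}) :
  tilable T [set f : point G e.+1 | (restr f \in Q) && (f ord_max \in T)].
Proof. by have := tilable_vert Q 0; rewrite T0. Qed.

Lemma tilableTup e (Q : {set point G e}) :
  tilable T [set f : point G e.+1 | (restr f \in Q) && (f ord_max \in Tup T x)].
Proof. exact: tilable_vert. Qed.

Lemma stepL0 e (X : {set point G e}) :
  X \subset Apow T x e -> [disjoint X & Cie T x 0 e] ->
  tilable T (Apow T x e :\: (X :|: Cie T x 0 e)) ->
  tilable T (Apow T x e.+1 :\: dagger T x X).
Proof.
move=> XA dXC tZ.
set Z := Apow T x e :\: (X :|: Cie T x 0 e).
set R0 := [set f : point G e.+1 | (restr f \in Z) && (f ord_max \in Cdown T x)].
set R1 := [set f : point G e.+1 | (restr f \in Apow T x e :\: Cie T x 0 e) && (f ord_max \in Tup T x)].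
set R2 := [set f : point G e.+1 | (restr f \in Cie T x 0 e) && (f ord_max \in T)].
have facts : forall g, [&& (g \in X) ==> (g \in Apow T x e), (g \in Cie T x 0 e) ==> (g \in Apow T x e)
   & ~~ ((g \in X) && (g \in Cie T x 0 e))].
  move=> g; apply/and3P; split; [exact/implyP/(subsetP XA) | exact/implyP/(subsetP (Cie_sub e 0)) |].
  apply/negP => /andP [h1 h2]; move: dXC; rewrite -setI_eq0 => /eqP /setP /(_ g).
  by rewrite in_setI h1 h2 in_set0.
have -> : Apow T x e.+1 :\: dagger T x X = R0 :|: (R1 :|: R2).
  apply/setP => f; rewrite in_setD !in_setU mem_Apow_S mem_dagger.
  rewrite [f \in R0]in_set [f \in R1]in_set [f \in R2]in_set /Z.
  move: (facts (restr f)); move: (restr f) (f ord_max) => g a.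
  rewrite /Cdown /Cup /Aset !in_setD !in_setU.
  case: (g \in X); case: (g \in Apow T x e); case: (g \in Cie T x 0 e);
  case: (a \in T); by case: (a \in Tup T x).
apply: tilableU; last apply: tilableU.
- apply: disjP' => f; rewrite in_setU [f \in R0]in_set [f \in R1]in_set [f \in R2]in_set /Z.
  move: (facts (restr f)); move: (restr f) (f ord_max) => g a.
  rewrite /Cdown /Cup /Aset !in_setD !in_setU.
  case: (g \in X); case: (g \in Apow T x e); case: (g \in Cie T x 0 e);
  case: (a \in T); by case: (a \in Tup T x).
- exact: tilable_ext.
- apply: disjP' => f; rewrite [f \in R1]in_set [f \in R2]in_set.
  move: (restr f) (f ord_max) => g a; rewrite !in_setD.
  by apply/negP => /and3P [/andP [/andP [h1 _] _] h2 _]; rewrite h2 in h1.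
- exact: tilableTup.
- exact: tilableT.
Qed.


Lemma offD_eq e (j : 'I_e) (f g : point G e.+1) :
  (forall k, k != widen_ord (leqnSn e) j -> f k = g k) -> offD (restr f) j = offD (restr g) j.
Proof.
move=> H; apply: eq_forallb => k; case: (boolP (k == j)) => kj //=.
rewrite !restrE H //; apply: contra kj => /eqP E.
Qed.

Lemma tilable_R3 e (j : 'I_e) (c : G) (W : {set G}) :
  tilable T [set f : point G e.+1 | (f (widen_ord (leqnSn e) j) \in [set t + c | t in T])
     && (offD (restr f) j && (f ord_max \in W))].
Proof.
apply: tilable_fiber => f g H; rewrite (offD_eq H) H //.
by rewrite eq_sym widen_neq.
Qed.

Lemma stepL1 e (j : 'I_e) (X : {set point G e}) :
  X \subset Apow T x e -> [disjoint X & Cie T x j.+1 e] ->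
  tilable T (Apow T x e :\: (X :|: Cie T x j.+1 e)) ->
  tilable T (Apow T x e.+1 :\: dagger T x X).
Proof.
move=> XA dXC tZ.
set jw := widen_ord (leqnSn e) j.
set Z := Apow T x e :\: (X :|: Cie T x j.+1 e).
set L := [set g : point G e | offD g j && (g j \in Aset T x)].
set R0 := [set f : point G e.+1 | (restr f \in Z) && (f ord_max \in Cdown T x)].
set R1 := [set f : point G e.+1 | (restr f \in Apow T x e :\: L) && (f ord_max \in Tup T x)].
set R2 := [set f : point G e.+1 | (restr f \in Cie T x j.+1 e) && (f ord_max \in T)].
set R3 := [set f : point G e.+1 | (f jw \in Tup T x) && (offD (restr f) j && (f ord_max \in Cup T x))].
set R4 := [set f : point G e.+1 | (f jw \in T) && (offD (restr f) j && (f ord_max \in Aset T x :&: Tup T x :&: T))].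
have facts : forall g, [&& (g \in X) ==> (g \in Apow T x e),
   ~~ ((g \in X) && ((g j \in Cup T x) && offD g j))
   & offD g j ==> ((g \in Apow T x e) == (g j \in Aset T x))].
  move=> g; apply/and3P; split; first exact/implyP/(subsetP XA).
    apply/negP => /andP [h1 h2]; move: dXC; rewrite -setI_eq0 => /eqP /setP /(_ g).
    by rewrite in_setI h1 Cie_split h2 in_set0.
  by apply/implyP => h; rewrite (Apow_off h).
have -> : Apow T x e.+1 :\: dagger T x X = R0 :|: (R1 :|: (R2 :|: (R3 :|: R4))).
  apply/setP => f; rewrite in_setD !in_setU mem_Apow_S mem_dagger.
  rewrite [f \in R0]in_set [f \in R1]in_set [f \in R2]in_set [f \in R3]in_set [f \in R4]in_set.
  rewrite -!restrE; move: (facts (restr f)); move: (restr f) (f ord_max) => g a.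
  rewrite /Z !in_setD !in_setU [g \in L]in_set Cie_split (Cie0_split j) /Cdown /Cup /Aset !in_setD !in_setU !in_setI ?in_setU.
  case: (g \in X); case: (g \in Apow T x e); case: (offD g j); case: (g j \in T);
  case: (g j \in Tup T x); case: (a \in T); by case: (a \in Tup T x).
have disj : forall A B : {set point G e.+1}, (forall f, f \in A -> f \in B -> False) -> [disjoint A & B].
  move=> A B H; apply: disjP' => f; apply/negP => /andP [h1 h2]; exact: (H f h1 h2).
apply: tilableU; [|exact: tilable_ext|apply: tilableU; [|exact: tilableTup|apply: tilableU;
   [|exact: tilableT|apply: tilableU]]].
- apply: disj => f; rewrite !in_setU [f \in R0]in_set [f \in R1]in_set [f \in R2]in_set [f \in R3]in_set [f \in R4]in_set.
  rewrite -!restrE; move: (facts (restr f)); move: (restr f) (f ord_max) => g a.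
  rewrite /Z !in_setD !in_setU [g \in L]in_set Cie_split /Cdown /Cup /Aset !in_setD !in_setU !in_setI ?in_setU.
  case: (g \in X); case: (g \in Apow T x e); case: (offD g j); case: (g j \in T);
  case: (g j \in Tup T x); case: (a \in T); by case: (a \in Tup T x).
- apply: disj => f; rewrite !in_setU [f \in R1]in_set [f \in R2]in_set [f \in R3]in_set [f \in R4]in_set /L.
  rewrite -!restrE; move: (facts (restr f)); move: (restr f) (f ord_max) => g a.
  rewrite /Z !in_setD !in_setU [g \in L]in_set Cie_split /Cdown /Cup /Aset !in_setD !in_setU !in_setI ?in_setU.
  case: (g \in X); case: (g \in Apow T x e); case: (offD g j); case: (g j \in T);
  case: (g j \in Tup T x); case: (a \in T); by case: (a \in Tup T x).
- apply: disj => f; rewrite !in_setU [f \in R2]in_set [f \in R3]in_set [f \in R4]in_set.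
  rewrite -!restrE; move: (facts (restr f)); move: (restr f) (f ord_max) => g a.
  rewrite Cie_split /Cdown /Cup /Aset !in_setD !in_setU !in_setI ?in_setU.
  case: (g \in X); case: (g \in Apow T x e); case: (offD g j); case: (g j \in T);
  case: (g j \in Tup T x); case: (a \in T); by case: (a \in Tup T x).
- apply: disj => f; rewrite [f \in R3]in_set [f \in R4]in_set.
  move: (f jw) (restr f) (f ord_max) => b g a.
  rewrite /Cup !in_setD !in_setI => /andP [_ /andP [_ /andP [aT _]]] /andP [_ /andP [_ /andP [_ aT2]]].
  by rewrite aT2 in aT.
- exact: tilable_R3.
- have := tilable_R3 j 0 (Aset T x :&: Tup T x :&: T); by rewrite T0.
Qed.


Lemma dagger_sub e (X : {set point G e}) :
  X \subset Apow T x e -> dagger T x X \subset Apow T x e.+1.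
Proof.
move=> XA; apply/subsetP => f; rewrite mem_dagger mem_Apow_S.
case/orP => /andP [h1 h2].
  by rewrite (subsetP XA _ h1) /=; move: h2; rewrite /Cdown /Aset !inE => /andP [_ ->].
by rewrite (subsetP (Cie_sub e 0) _ h1) /=; move: h2; rewrite /Cup /Aset !inE => /andP [_ ->]; rewrite orbT.
Qed.

Lemma stepL e (i : nat) (X : {set point G e}) : (i <= e)%N ->
  X \subset Apow T x e -> [disjoint X & Cie T x i e] ->
  tilable T (Apow T x e :\: (X :|: Cie T x i e)) ->
  hole T x (dagger T x X).
Proof.
move=> ie XA dXC tZ; split; first exact: dagger_sub.
case: i ie dXC tZ => [|j] ie dXC tZ; first exact: stepL0.
exact: (@stepL1 e (Ordinal ie)).
Qed.

Lemma dagger_setD e (i : nat) (Y : {set point G e}) : (i <= e)%N ->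
  dagger T x (Y :\: Cie T x i e) = dagger T x Y :\: Cie T x i e.+1.
Proof.
move=> ie; apply/setP => f; rewrite in_setD !mem_dagger (mem_Cie_S _ ie) in_setD.
move: (restr f) (f ord_max) => g a; rewrite /Cdown /Cup !in_setD.
case: (g \in Y); case: (g \in Cie T x i e); case: (g \in Cie T x 0 e);
case: (a \in T); by case: (a \in Tup T x).
Qed.

Lemma dagger_iter_setD d (i : nat) (Y : {set point G d}) k : (i <= d)%N ->
  dagger_iter T x k (Y :\: Cie T x i d) = dagger_iter T x k Y :\: Cie T x i (k + d).
Proof.
move=> id; elim: k => [//|k IH] /=.
by rewrite IH dagger_setD // (leq_trans id) // leq_addl.
Qed.

Lemma dagger_iter_sub d (Y : {set point G d}) k :
  Y \subset Apow T x d -> dagger_iter T x k Y \subset Apow T x (k + d).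
Proof. by move=> YA; elim: k => [//|k IH] /=; apply: dagger_sub. Qed.

Lemma Cie_dagger_iter d (i : nat) (Y : {set point G d}) k : (i <= d)%N ->
  Cie T x i d \subset Y -> Cie T x i (k + d) \subset dagger_iter T x k Y.
Proof.
move=> id CY; elim: k => [//|k IH] /=.
apply/subsetP => f; rewrite (mem_Cie_S _ (leq_trans id (leq_addl _ _))) mem_dagger.
by case/andP => h1 h2; rewrite (subsetP IH _ h1) h2.
Qed.

Lemma Cie_disj_aux e (i : nat) (j : 'I_e) (f : point G e) :
  (i != j.+1) -> f \in Cie T x i e -> f \in Cie T x j.+1 e -> False.
Proof.
move=> ij h1; rewrite Cie_split => /andP [h2 _]; move: h1; rewrite /Cie inE => /forallP /(_ j) h.
move: h; have -> : (j.+1 == i) = false by apply/negbTE; rewrite eq_sym.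
by move: h2; rewrite /Cup /Cdown !in_setD => /andP [h3 _] /andP [_ h4]; rewrite h4 in h3.
Qed.

Lemma Cie_disj e (i j : nat) : i != j -> (i <= e)%N -> (j <= e)%N ->
  [disjoint Cie T x i e & Cie T x j e].
Proof.
move=> ij ie je; apply: disjP' => f; apply/negP => /andP [h1 h2].
case: j ij je h2 => [|j] ij je h2.
  case: i ij ie h1 => [//|i] ij ie h1.
  by apply: (@Cie_disj_aux e 0 (Ordinal ie) f) => //.
exact: (@Cie_disj_aux e i (Ordinal je) f).
Qed.

End S.

Lemma bigcup_seq_mem (U : finType) (s : seq nat) (F : nat -> {set U}) (f : U) :
  f \in \bigcup_(j <- s) F j -> exists2 j, j \in s & f \in F j.
Proof.
elim: s => [|j s IH]; first by rewrite big_nil inE.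
rewrite big_cons in_setU => /orP [h|/IH [k ks fk]]; first by exists j; rewrite ?mem_head.
by exists k; rewrite // in_cons ks orbT.
Qed.

Theorem corollary12 (G : finZmodType) (T : {set G}) (x : G)
  (hT0 : T != set0) (hTG : T \proper [set: G]) (hx : Tup T x != T)
  (d : nat) (hd : (1 <= d)%N) (s : seq nat)
  (hs_uniq : uniq s) (hs_le : all (fun i => (i <= d)%N) s) :
  hole T x
    (dagger_iter T x (size s)
       (Apow T x d :\: \bigcup_(i <- s) Cie T x i d)).
Proof.
clear hT0 hTG hx hd.
elim: s hs_uniq hs_le => [|i s IH] /=.
  move=> _ _; rewrite big_nil setD0; split => //.
  by rewrite setDv; apply: tilable0.
case/andP=> inS us /andP [id als].
case: (IH us als) => WA tW.
set W := dagger_iter T x (size s) (Apow T x d :\: \bigcup_(j <- s) Cie T x j d) in WA tW.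
have CW : Cie T x i (size s + d) \subset W.
  apply: Cie_dagger_iter => //; apply/subsetP => f fC; rewrite in_setD (subsetP (Cie_sub _ _ _ _) _ fC) andbT.
  apply/negP => /bigcup_seq_mem [j js fj].
  have ij : i != j by apply: contraNneq inS => ->.
  move: (Cie_disj T x ij id (allP als j js)) => /disjoint_setI0 /setP /(_ f).
  by rewrite in_setI fC fj in_set0.
have -> : Apow T x d :\: \bigcup_(j <- i :: s) Cie T x j d
   = (Apow T x d :\: \bigcup_(j <- s) Cie T x j d) :\: Cie T x i d.
  by rewrite big_cons setDDl setUC.
rewrite dagger_iter_setD // -/W.
apply: (@stepL _ T x _ i); first by rewrite (leq_trans id) // leq_addl.
- exact: subset_trans (subsetDl _ _) WA.
- apply: disjP' => f; rewrite in_setD; apply/negP => /andP [/andP [h _] h2]; exact: (negP h h2).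
- have -> : (W :\: Cie T x i (size s + d)) :|: Cie T x i (size s + d) = W.
    apply/setP => f; rewrite in_setU in_setD.
    apply/idP/idP => [/orP [/andP [_ //]|/(subsetP CW) //] | fW]; by rewrite fW andbT orNb.
  exact: tW.
Qed.
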